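(* Let $\theta$ be a primitive aperiodic quasi-bijective substitution in simplified form, with notation as in the context. Then $S^{(2)}_\theta$ is invariant under diagonal right multiplication by elements of $\mathcal H_{-+}\cup\mathcal H_+$, i.e. $(L,R)\in S^{(2)}_\theta$ and $\psi\in\mathcal H_{-+}\cup\mathcal H_+$ imply $(L\psi,R\psi)\in S^{(2)}_\theta$. Furthermore, for every $\phi\in\mathcal H_{+-}$, the map $(L,R)\mapsto(L\phi,R\phi)$ is a bijection from $S^{(2)}_\theta$ onto the set $S^{(2,-)}_\theta$ of consecutive pairs $(L,R)\in\mathcal H_-\times\mathcal H_{+-}$.
   Context: A substitution $\theta$ of constant length $\ell$ on a finite alphabet $\mathcal A$ is given by maps $\theta_0,\dots,\theta_{\ell-1}:\mathcal A\to\mathcal A$ with $\theta(a)=\theta_0(a)\cdots\theta_{\ell-1}(a)$; the column maps $(\theta^n)_i$, $0\le i<\ell^n$, of $\theta^n$ are obtained by $(\theta\theta')_{i+\ell j}=\theta_i\theta'_j$ (composition of maps). The column rank $c$ is the minimum over $n,i$ of $|(\theta^n)_i(\mathcal A)|$. $\theta$ is quasi-bijective if for some power each column map has rank $c$; it is in simplified form if each $\theta_i$ has rank $c$ and every $\theta$-periodic point is $\theta$-fixed, so that $e_+:=\theta_0$ and $e_-:=\theta_{\ell-1}$ are idempotent maps. $S_\theta$ is the semigroup of maps $\mathcal A\to\mathcal A$ generated by all column maps of all $\theta^n$, $n\ge1$; it is completely simple and $e_\pm$ are minimal idempotents. $\mathcal H_+=e_+S_\theta e_+$ and $\mathcal H_-=e_-S_\theta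 e_-$ are groups; $e_{+-}$ is the unique idempotent in the group $\mathcal H_{+-}$ containing $e_+e_-$ (the intersection of the right ideal class of $e_+$ and left ideal class of $e_-$), and $e_{-+}$, $\mathcal H_{-+}$ are defined symmetrically (containing $e_-e_+$). Two elements $L,R\in S_\theta$ are consecutive if $L=(\theta^n)_{i-1}$, $R=(\theta^n)_i$ for some $n>0$, $0<i<\ell^n$. $S^{(2)}_\theta$ is the set of consecutive pairs $(L,R)\in\mathcal H_{-+}\times\mathcal H_+$. *)

(* Defs.v *)
From mathcomp Require Import all_boot all_order all_algebra.
Set Implicit Arguments. Unset Strict Implicit. Unset Printing Implicit Defensive.
Import GRing.Theory Num.Theory.

(* A substitution of constant length l on the finite alphabet A is given by
   its column maps th : 'I_l -> {ffun A -> A}, theta(a) = th_0(a) ... th_{l-1}(a). *)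

Section Subst.
Variables (A : finType) (l : nat) (th : 'I_l -> {ffun A -> A}).

Definition idf : {ffun A -> A} := [ffun a => a].
Definition compf (f g : {ffun A -> A}) : {ffun A -> A} := [ffun a => f (g a)].

Definition thn (i : nat) : {ffun A -> A} :=
  if insub i is Some o then th o else idf.

(* colmap n k = (theta^n)_k, using (theta theta')_{i + l j} = theta_i theta'_j *)
Fixpoint colmap (n k : nat) : {ffun A -> A} :=
  match n with
  | 0 => idf
  | n'.+1 => compf (thn (k %% l)) (colmap n' (k %/ l))
  end.

Definition rank (f : {ffun A -> A}) : nat := #|[set f a | a : A]|.

Definition word (n : nat) (a : A) : seq A := [seq colmap n k a | k <- iota 0 (l ^ n)].

Definition legal (w : seq A) : Prop := exists n a, infix w (word n a).

Definition inX (x : int -> A) : Prop :=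
  forall (m : int) (len : nat), legal [seq x (m + i%:Z)%R | i <- iota 0 len].

(* action of theta^n on bi-infinite sequences: (theta^n x)_{l^n z + k} = (theta^n)_k (x_z) *)
Definition sapply (n : nat) (x : int -> A) : int -> A :=
  fun z => colmap n `|(z %% (l ^ n)%:Z)%Z|%N (x (z %/ (l ^ n)%:Z)%Z).

Definition primitive : Prop :=
  exists n, 0 < n /\ forall a b : A, exists k, k < l ^ n /\ colmap n k a = b.

Definition aperiodic : Prop :=
  forall x, inX x -> forall p : nat, 0 < p -> ~ (forall z : int, x (z + p%:Z)%R = x z).

Definition is_colrank (c : nat) : Prop :=
  (exists n k, [/\ 0 < n, k < l ^ n & rank (colmap n k) = c]) /\
  (forall n k, 0 < n -> k < l ^ n -> c <= rank (colmap n k)).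

Definition quasi_bijective : Prop :=
  exists c, is_colrank c /\
    exists n, 0 < n /\ forall k, k < l ^ n -> rank (colmap n k) = c.

Definition periodic_point (x : int -> A) : Prop :=
  inX x /\ exists p, 0 < p /\ sapply p x =1 x.
Definition fixed_point (x : int -> A) : Prop := sapply 1 x =1 x.

Definition simplified : Prop :=
  (exists c, is_colrank c /\ forall i, rank (th i) = c) /\
  (forall x, periodic_point x -> fixed_point x).

Inductive inS : {ffun A -> A} -> Prop :=
  | inS_col n k : 0 < n -> k < l ^ n -> inS (colmap n k)
  | inS_mul f g : inS f -> inS g -> inS (compf f g).

Definition inS1 f := f = idf \/ inS f.

Definition Rrel f g := (exists u, inS1 u /\ f = compf g u) /\ (exists v, inS1 v /\ g = compf f v).
Definition Lrel f g := (exists u, inS1 u /\ f = compf u g) /\ (exists v, inS1 v /\ g = compf v f).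

Definition ep : {ffun A -> A} := thn 0.
Definition em : {ffun A -> A} := thn l.-1.

Definition inHp f := exists s, inS s /\ f = compf ep (compf s ep).
Definition inHm f := exists s, inS s /\ f = compf em (compf s em).
Definition inHpm f := inS f /\ Rrel f ep /\ Lrel f em.
Definition inHmp f := inS f /\ Rrel f em /\ Lrel f ep.

Definition consecutive (L R : {ffun A -> A}) : Prop :=
  exists n i, [/\ 0 < n, 0 < i, i < l ^ n, L = colmap n i.-1 & R = colmap n i].

Definition inS2 (p : {ffun A -> A} * {ffun A -> A}) : Prop :=
  consecutive p.1 p.2 /\ inHmp p.1 /\ inHp p.2.
Definition inS2m (p : {ffun A -> A} * {ffun A -> A}) : Prop :=
  consecutive p.1 p.2 /\ inHm p.1 /\ inHpm p.2.

End Subst.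

(* Main.v *)
Require Import Defs.
From mathcomp Require Import all_boot all_order all_algebra.
From mathcomp Require Import zify.
Set Implicit Arguments. Unset Strict Implicit. Unset Printing Implicit Defensive.

Section Pf.
Variables (A : finType) (l : nat) (th : 'I_l -> {ffun A -> A}).
Hypothesis l0 : 0 < l.

Local Notation F := {ffun A -> A}.
Local Notation S := (inS th).
Definition img (f : F) := [set f a | a : A].
Definition kerE (f g : F) := forall a b, (f a == f b) = (g a == g b).

Lemma compfA (f g h : F) : compf f (compf g h) = compf (compf f g) h.
Proof. by apply/ffunP => a; rewrite !ffunE. Qed.
Lemma comp1f (f : F) : compf (idf A) f = f.
Proof. by apply/ffunP => a; rewrite !ffunE. Qed.
Lemma compf1 (f : F) : compf f (idf A) = f.
Proof. by apply/ffunP => a; rewrite !ffunE. Qed.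

Lemma colmapD n m i j : i < l ^ n ->
  colmap th (n + m) (i + l ^ n * j) = compf (colmap th n i) (colmap th m j).
Proof.
elim: n i => [|n IH] i hi.
  by move: hi; rewrite expn0 ltnS leqn0 => /eqP ->; rewrite /= add0n mul1n comp1f.
rewrite addSn /=.
have -> : (i + l ^ n.+1 * j) %/ l = i %/ l + l ^ n * j by rewrite expnS -mulnA addnC mulnC divnMDl // mulnC addnC.
rewrite IH; last by rewrite ltn_divLR // mulnC -expnS.
rewrite compfA; do 2 congr compf.
by rewrite expnS -mulnA addnC mulnC modnMDl.
Qed.

Lemma inS_col_repr f : S f -> exists n k, [/\ 0 < n, k < l ^ n & f = colmap th n k].
Proof.
elim=> [n k hn hk|f0 g _ [n [i [hn hi ->]]] _ [m [j [hm hj ->]]]].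
  by exists n, k.
exists (n + m), (i + l ^ n * j); split; first by rewrite addn_gt0 hn.
  rewrite expnD.
  have : i + l ^ n * j <= l ^ n - 1 + l ^ n * (l ^ m - 1) by rewrite leq_add // ?leq_mul2l; lia.
  have h1 : 0 < l ^ m by rewrite expn_gt0 l0.
  have h2 : 0 < l ^ n by rewrite expn_gt0 l0.
  nia.
by rewrite colmapD.
Qed.

Lemma compf_img (f g : F) : img (compf f g) = f @: img g.
Proof. by rewrite /img -imset_comp; apply: eq_imset => a; rewrite ffunE. Qed.

Lemma img_sub (f g : F) : img (compf f g) \subset img f.
Proof. by apply/subsetP => y /imsetP [a _ ->]; rewrite ffunE imset_f. Qed.

Lemma rank_compl (f g : F) : rank (compf f g) <= rank g.
Proof. by rewrite /rank -/(img _) compf_img leq_imset_card. Qed.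
Lemma rank_compr (f g : F) : rank (compf f g) <= rank f.
Proof. exact: subset_leq_card (img_sub f g). Qed.

Lemma ker_of_rank (u g : F) a b : rank (compf u g) = rank g ->
  compf u g a = compf u g b -> g a = g b.
Proof.
rewrite /rank -/(img _) -/(img g) compf_img => /eqP /imset_injP inj.
by rewrite !ffunE => /inj; apply; apply: imset_f.
Qed.

Lemma img_of_rank (f g : F) : rank (compf f g) = rank f -> img (compf f g) = img f.
Proof. by move=> h; apply/eqP; rewrite eqEcard img_sub /= /rank in h *; rewrite h. Qed.

Definition powf n (f : F) := iter n (compf f) (idf A).
Lemma powfS n f : powf n.+1 f = compf f (powf n f). Proof. by []. Qed.
Lemma powfD m n f : powf (m + n) f = compf (powf m f) (powf n f).
Proof. by elim: m => [|m IH]; rewrite ?comp1f // addSn !powfS IH compfA. Qed.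
Lemma powfSr n f : powf n.+1 f = compf (powf n f) f.
Proof. by rewrite -addn1 powfD /powf /= compf1. Qed.

Lemma powf_period i j f : i < j -> powf i f = powf j f ->
  forall t k, powf (i + t + k * (j - i)) f = powf (i + t) f.
Proof.
move=> ij e t; elim=> [|k IH]; first by rewrite mul0n addn0.
have -> : i + t + k.+1 * (j - i) = j + (t + k * (j - i)) by rewrite mulSn; lia.
by rewrite powfD -e -powfD addnA.
Qed.

Lemma idem_pow f : exists M, compf (powf M.+1 f) (powf M.+1 f) = powf M.+1 f.
Proof.
pose G (i : 'I_(#|{: F}|).+1) := powf i f.
have noninj : ~ injective G by move/leq_card; rewrite card_ord ltnn.
have : [exists i, exists j, (i != j) && (G i == G j)].
  apply: contraT => H; exfalso; apply: noninj => x y exy.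
  apply/eqP; apply: contraNT H => nxy; apply/existsP; exists x; apply/existsP; exists y.
  by rewrite nxy exy eqxx.
case/existsP=> i /existsP [j /andP [nij /eqP eij]].
have [i' [j' [ij e]]] : exists i' j', i' < j' /\ powf i' f = powf j' f.
  rewrite /G in eij; case: (ltngtP i j) => h.
  - by exists i, j.
  - by exists j, i.
  - by move: nij; rewrite -val_eqE /= h eqxx.
exists ((i'.+1 * (j' - i')).-1).
have hp : 0 < i'.+1 * (j' - i') by rewrite muln_gt0 subn_gt0 ij.
rewrite prednK // -powfD.
have := powf_period ij e (i'.+1 * (j' - i') - i') i'.+1.
have -> : i' + (i'.+1 * (j' - i') - i') = i'.+1 * (j' - i') by nia.
by move=> ->.
Qed.

Variable c : nat.
Hypothesis hc : is_colrank th c.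
Hypothesis hrk : forall i, rank (th i) = c.

Lemma inS_rank f : S f -> rank f = c.
Proof.
move=> hf; apply/eqP; rewrite eqn_leq; apply/andP; split; last first.
  by case: (inS_col_repr hf) => n [k [hn hk ->]]; apply: hc.2.
elim: hf => [n k hn hk|f0 g _ _ _ hg]; last by apply: leq_trans (rank_compl _ _) hg.
case: n hn hk => // n _ _ /=; apply: leq_trans (rank_compr _ _) _.
rewrite /thn; case: insubP => [o _ _|]; first by rewrite hrk.
by rewrite ltn_pmod.
Qed.

Lemma inS_mul1 f p : S f -> inS1 th p -> S (compf f p).
Proof. by move=> hf [->|hp]; [rewrite compf1 | apply: inS_mul]. Qed.
Lemma inS_1mul f p : S f -> inS1 th p -> S (compf p f).
Proof. by move=> hf [->|hp]; [rewrite comp1f | apply: inS_mul]. Qed.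
Lemma inS1_pow n f : S f -> inS1 th (powf n f).
Proof.
move=> hf; elim: n => [|n IH]; first by left.
by right; rewrite powfS; apply: inS_mul1.
Qed.
Lemma inS_powS n f : S f -> S (powf n.+1 f).
Proof. by move=> hf; rewrite powfS; apply: inS_mul1 (inS1_pow _ _). Qed.

Lemma imgS f g : S f -> S g -> img (compf f g) = img f.
Proof. by move=> hf hg; apply: img_of_rank; rewrite !inS_rank //; apply: inS_mul. Qed.
Lemma kerS f g : S f -> S g -> kerE (compf f g) g.
Proof.
move=> hf hg a b; apply/eqP/eqP => [|h]; last by rewrite !ffunE h.
by apply: ker_of_rank; rewrite !inS_rank //; apply: inS_mul.
Qed.

Lemma idem_facts k : S k -> exists e, [/\ S e, compf e e = e, img e = img k, kerE e k
   & (exists M, e = powf M.+1 k)].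
Proof.
move=> hk; case: (idem_pow k) => M hM; exists (powf M.+1 k); split=> //.
- exact: inS_powS.
- rewrite powfS; apply: img_of_rank.
  by rewrite -powfS !inS_rank //; apply: inS_powS.
- move=> a b; apply/eqP/eqP => [|h]; last by rewrite powfSr !ffunE h.
  rewrite powfSr; apply: ker_of_rank.
  by rewrite -powfSr !inS_rank //; apply: inS_powS.
- by exists M.
Qed.

Lemma idemP (e : F) a : compf e e = e -> e (e a) = e a.
Proof. by move/ffunP/(_ a); rewrite ffunE. Qed.

Lemma witR f g : S f -> S g -> img f = img g -> exists u, S u /\ f = compf g u.
Proof.
move=> hf hg hfg; have hx : S (compf g f) by apply: inS_mul.
case: (idem_facts hx) => e [he ee ie _ [M eM]].
exists (compf (compf f (powf M (compf g f))) f); split.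
  by apply: inS_mul => //; apply: inS_mul1 => //; apply: inS1_pow.
rewrite compfA (compfA g f) -powfS -eM.
apply/ffunP => a; rewrite ffunE.
have : f a \in img e by rewrite ie imgS // -hfg imset_f.
by case/imsetP => b _ ->; rewrite idemP.
Qed.

Lemma witL f g : S f -> S g -> kerE f g -> exists u, S u /\ f = compf u g.
Proof.
move=> hf hg hfg; have hx : S (compf f g) by apply: inS_mul.
case: (idem_facts hx) => e [he ee ie ke [M eM]].
exists (compf f (compf (powf M (compf f g)) f)); split.
  by apply: inS_mul => //; apply: inS_1mul => //; apply: inS1_pow.
rewrite -compfA -[compf (compf (powf _ _) f) g]compfA -powfSr -eM.
apply/ffunP => a; rewrite ffunE; apply/eqP.
by rewrite hfg -(kerS hf hg) -ke idemP.
Qed.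


Lemma kerS1 u g : S g -> S (compf u g) -> kerE (compf u g) g.
Proof.
move=> hg hug a b; apply/eqP/eqP => [|h]; last by rewrite !ffunE h.
by apply: ker_of_rank; rewrite !inS_rank.
Qed.
Lemma imgS1 f u : S f -> S (compf f u) -> img (compf f u) = img f.
Proof. by move=> hf hfu; apply: img_of_rank; rewrite !inS_rank. Qed.

Lemma Rrel_img f g : Rrel th f g -> img f = img g.
Proof.
case=> [[u [_ ->]] [v [_ hv]]]; apply/eqP; rewrite eqEsubset img_sub /=.
by rewrite {1}hv img_sub.
Qed.
Lemma img_Rrel f g : S f -> S g -> img f = img g -> Rrel th f g.
Proof.
move=> hf hg e; split.
  by case: (witR hf hg e) => u [hu ->]; exists u; split => //; right.
by case: (witR hg hf (esym e)) => u [hu ->]; exists u; split => //; right.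
Qed.
Lemma Lrel_ker f g : Lrel th f g -> kerE f g.
Proof.
case=> [[u [_ hu]] [v [_ hv]]] a b; apply/eqP/eqP => h.
  by rewrite hv !ffunE h.
by rewrite hu !ffunE h.
Qed.
Lemma ker_Lrel f g : S f -> S g -> kerE f g -> Lrel th f g.
Proof.
move=> hf hg e; split.
  by case: (witL hf hg e) => u [hu ->]; exists u; split => //; right.
have e' : kerE g f by move=> a b; rewrite e.
by case: (witL hg hf e') => u [hu ->]; exists u; split => //; right.
Qed.

Lemma inH_char k f : S k ->
  (exists s, S s /\ f = compf k (compf s k)) <-> [/\ S f, img f = img k & kerE f k].
Proof.
move=> hk; split.
  case=> s [hs ->]; have hsk : S (compf s k) by apply: inS_mul.
  split; first by apply: inS_mul.
    by apply: imgS.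
  by rewrite compfA; apply: kerS => //; apply: inS_mul.
case=> hf imf kf.
case: (idem_facts hk) => e [he ee ie ke [M eM]].
have h1 : compf e f = f.
  apply/ffunP => a; rewrite ffunE.
  have : f a \in img e by rewrite ie -imf imset_f.
  by case/imsetP => b _ ->; rewrite idemP.
have h2 : compf f e = f.
  by apply/ffunP => a; rewrite ffunE; apply/eqP; rewrite kf -ke idemP.
exists (compf (powf M k) (compf f (powf M k))); split.
  apply: inS_1mul; last exact: inS1_pow.
  by apply: inS_mul1 => //; exact: inS1_pow.
rewrite -{1}h2 -{1}h1 {1}eM powfS.
rewrite {1}eM powfSr !compfA //.
Qed.

Lemma ep_S : S (ep th).
Proof.
have -> : ep th = colmap th 1 0 by rewrite /= mod0n compf1.
by apply: inS_col; rewrite // expn1.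
Qed.
Lemma em_S : S (em th).
Proof.
have -> : em th = colmap th 1 l.-1 by rewrite /= modn_small ?compf1 // prednK.
by apply: inS_col; rewrite // expn1 prednK.
Qed.

Lemma consec_mul L R psi : consecutive th L R -> S psi ->
  consecutive th (compf L psi) (compf R psi).
Proof.
case=> n [i [hn hi hil -> ->]] /inS_col_repr [m [j [hm hj ->]]].
have h1 : 0 < l ^ m by rewrite expn_gt0 l0.
have h2 : 0 < l ^ n by rewrite expn_gt0 l0.
exists (n + m), (i + l ^ n * j); split.
- by rewrite addn_gt0 hn.
- by rewrite addn_gt0 hi.
- rewrite expnD.
  have : i + l ^ n * j <= l ^ n - 1 + l ^ n * (l ^ m - 1) by rewrite leq_add // ?leq_mul2l; lia.
  nia.
- have -> : (i + l ^ n * j).-1 = i.-1 + l ^ n * j by lia.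
  by rewrite colmapD //; lia.
- by rewrite colmapD.
Qed.


Lemma inHp_char f : inHp th f <-> [/\ S f, img f = img (ep th) & kerE f (ep th)].
Proof. exact: inH_char ep_S. Qed.
Lemma inHm_char f : inHm th f <-> [/\ S f, img f = img (em th) & kerE f (em th)].
Proof. exact: inH_char em_S. Qed.

Lemma part1 L R psi : inS2 th (L, R) -> inHmp th psi \/ inHp th psi ->
     inS2 th (compf L psi, compf R psi).
Proof.
case=> /= hcons [[SL [RL LL]] /inHp_char [SR iR kR]] hpsi.
have [Sp kp] : S psi /\ kerE psi (ep th).
  case: hpsi => [[Sp [_ Lp]]|/inHp_char [Sp _ kp]]; last by [].
  by split => //; apply: Lrel_ker.
have SLp : S (compf L psi) by apply: inS_mul.
have SRp : S (compf R psi) by apply: inS_mul.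
split; first exact: consec_mul.
split => /=.
  split => //; split.
    by apply: img_Rrel => //; [exact: em_S | rewrite imgS //; exact: Rrel_img].
  apply: ker_Lrel => //; first exact: ep_S.
  by move=> a b; rewrite kerS // kp.
apply/inHp_char; split => //; first by rewrite imgS.
by move=> a b; rewrite kerS // kp.
Qed.

Lemma part2 phi : inHpm th phi ->
     [/\ (forall p, inS2 th p -> inS2m th (compf p.1 phi, compf p.2 phi)),
         (forall p q, inS2 th p -> inS2 th q ->
            (compf p.1 phi, compf p.2 phi) = (compf q.1 phi, compf q.2 phi) -> p = q)
       & (forall q, inS2m th q -> exists p, inS2 th p /\ (compf p.1 phi, compf p.2 phi) = q)].
Proof.
case=> Sph [/Rrel_img iph /Lrel_ker kph].
split.
- case=> L R [/= hcons [[SL [/Rrel_img iL /Lrel_ker kL]] /inHp_char [SR iR kR]]].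
  have SLp : S (compf L phi) by apply: inS_mul.
  have SRp : S (compf R phi) by apply: inS_mul.
  split; first exact: consec_mul.
  split => /=.
    apply/inHm_char; split => //; first by rewrite imgS.
    by move=> a b; rewrite kerS // kph.
  split => //; split.
    by apply: img_Rrel => //; [exact: ep_S | rewrite imgS].
  apply: ker_Lrel => //; first exact: em_S.
  by move=> a b; rewrite kerS // kph.
- have canc : forall f g, S f -> S g -> kerE f (ep th) -> kerE g (ep th) ->
      compf f phi = compf g phi -> f = g.
    move=> f g Sf Sg kf kg efg.
    case: (idem_facts ep_S) => e [he ee ie ke _].
    have fe : forall h, kerE h (ep th) -> forall a, h (e a) = h a.
      by move=> h kh a; apply/eqP; rewrite kh -ke idemP.
    apply/ffunP => a; rewrite -fe // -(fe g) //.
    have : e a \in img phi by rewrite iph -ie imset_f.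
    case/imsetP => b _ ->.
    by move/ffunP: efg => /(_ b); rewrite !ffunE.
  case=> L R [L' R'] [/= _ [[SL [_ /Lrel_ker kL]] /inHp_char [SR _ kR]]].
  case=> /= _ [[SL' [_ /Lrel_ker kL']] /inHp_char [SR' _ kR']] [e1 e2].
  by rewrite (canc _ _ SL SL' kL kL' e1) (canc _ _ SR SR' kR kR' e2).
- case=> L' R' [/= hcons [/inHm_char [SL' iL' kL'] [SR' [/Rrel_img iR' /Lrel_ker kR']]]].
  pose psi0 := compf (em th) (ep th).
  have S0 : S psi0 by apply: inS_mul; [exact: em_S | exact: ep_S].
  pose g := compf psi0 phi.
  have Sg : S g by apply: inS_mul.
  case: (idem_facts Sg) => e [he ee ie ke [M eM]].
  pose psi := compf (powf M g) psi0.
  have Spsi : S psi by apply: inS_1mul => //; apply: inS1_pow.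
  have epsi : compf psi phi = e by rewrite eM powfSr -compfA.
  have kem : kerE e (em th) by move=> a b; rewrite ke kerS // kph.
  have fe : forall h, kerE h (em th) -> compf h e = h.
    by move=> h kh; apply/ffunP => a; rewrite ffunE; apply/eqP; rewrite kh -kem idemP.
  have kpsi : kerE psi (ep th).
    by move=> a b; rewrite (kerS1 S0 Spsi) (kerS em_S ep_S).
  exists (compf L' psi, compf R' psi); split; last first.
    by rewrite /= -(compfA L') -(compfA R') epsi !fe.
  have SLp : S (compf L' psi) by apply: inS_mul.
  have SRp : S (compf R' psi) by apply: inS_mul.
  split; first exact: consec_mul.
  split => /=.
    split => //; split.
      by apply: img_Rrel => //; [exact: em_S | rewrite imgS].
    apply: ker_Lrel => //; first exact: ep_S.
    by move=> a b; rewrite kerS // kpsi.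
  apply/inHp_char; split => //; first by rewrite imgS.
  by move=> a b; rewrite kerS // kpsi.
Qed.

End Pf.

Theorem mainTheorem19 (A : finType) (l : nat) (th : 'I_l -> {ffun A -> A})
  (hl : 1 < l) (hprim : primitive th) (hap : aperiodic th)
  (hqb : quasi_bijective th) (hsf : simplified th) :
  (forall L R psi, inS2 th (L, R) -> inHmp th psi \/ inHp th psi ->
     inS2 th (compf L psi, compf R psi)) /\
  (forall phi, inHpm th phi ->
     [/\ (forall p, inS2 th p -> inS2m th (compf p.1 phi, compf p.2 phi)),
         (forall p q, inS2 th p -> inS2 th q ->
            (compf p.1 phi, compf p.2 phi) = (compf q.1 phi, compf q.2 phi) -> p = q)
       & (forall q, inS2m th q -> exists p, inS2 th p /\ (compf p.1 phi, compf p.2 phi) = q)]).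
Proof.
have l0 : 0 < l by apply: ltnW.
case: hsf => [[c [hc hrk]] _].
split; [exact: (part1 l0 hc hrk) | exact: (part2 l0 hc hrk)].
Qed.
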